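(* Let $M$ be a set of $5$ indivisible items. There exist strict monotone preferences $\preceq_1,\preceq_2$ over $2^M$ for two agents such that for every budget profile $(b_1,b_2)$ with $b_1,b_2>0$ and $\tfrac{4}{3}b_2>b_1>b_2$, the Fisher market with these preferences and budgets has no competitive equilibrium.
   Context: A monotone preference $\preceq_i$ is a complete and transitive weak order over all subsets of $M$ such that $S\preceq_i T$ whenever $S\subseteq T$; it is strict if for any $S\ne T$ either $S\prec_i T$ or $T\prec_i S$ (where $S\prec_i T$ means $S\preceq_i T$ and not $T\preceq_i S$). Given item prices $p=(p_j)_{j\in M}$ with $p(S)=\sum_{j\in S}p_j$, a bundle $S$ is demanded by agent $i$ with budget $b_i$ if $p(S)\le b_i$ and $p(T)>b_i$ for every $T$ with $S\prec_i T$. A competitive equilibrium is a pair $(\mathcal S,p)$ where $\mathcal S=(S_1,S_2)$ is a partition of all items of $M$ between the two agents and $p$ is a price vector, such that $S_i$ is demanded by agent $i$ at prices $p$ for each $i$. *)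

(* Defs.v *)
From mathcomp Require Import all_boot all_order all_algebra.
From mathcomp Require Import reals.
Set Implicit Arguments. Unset Strict Implicit. Unset Printing Implicit Defensive.
Import Order.TTheory GRing.Theory Num.Theory.
Local Open Scope ring_scope.

(* Items: M = 'I_m; bundles are subsets {set 'I_m}.
   A preference is a boolean relation pr with  pr S T  meaning  S ⪯ T. *)
Definition pref (m : nat) := {set 'I_m} -> {set 'I_m} -> bool.

Definition pref_lt m (pr : pref m) (S T : {set 'I_m}) : bool :=
  pr S T && ~~ pr T S.

Definition monotone_pref m (pr : pref m) : Prop :=
  [/\ (forall S T, pr S T || pr T S),
      (forall S T U, pr S T -> pr T U -> pr S U)
    & (forall S T : {set 'I_m}, S \subset T -> pr S T)].

Definition strict_pref m (pr : pref m) : Prop :=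
  forall S T, S != T -> pref_lt pr S T || pref_lt pr T S.

Definition cost (R : realType) m (p : 'I_m -> R) (S : {set 'I_m}) : R :=
  \sum_(j in S) p j.

Definition demanded (R : realType) m (pr : pref m) (b : R) (p : 'I_m -> R)
    (S : {set 'I_m}) : Prop :=
  cost p S <= b /\ (forall T, pref_lt pr S T -> b < cost p T).

Definition competitive_equilibrium (R : realType) m (pr1 pr2 : pref m)
    (b1 b2 : R) (S1 S2 : {set 'I_m}) (p : 'I_m -> R) : Prop :=
  [/\ S1 :&: S2 = set0, S1 :|: S2 = setT,
      demanded pr1 b1 p S1 & demanded pr2 b2 p S2].

(* Main.v *)
Require Import Defs.
From mathcomp Require Import all_boot all_order all_algebra.
From mathcomp Require Import reals.
From mathcomp Require Import lra.
Import Order.TTheory GRing.Theory Num.Theory.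
Local Open Scope ring_scope.

Definition bit (c k : nat) : bool := odd (iter k half c).

Definition o0 : 'I_5 := @Ordinal 5 0 isT.
Definition o1 : 'I_5 := @Ordinal 5 1 isT.
Definition o2 : 'I_5 := @Ordinal 5 2 isT.
Definition o3 : 'I_5 := @Ordinal 5 3 isT.
Definition o4 : 'I_5 := @Ordinal 5 4 isT.

Definition code (S : {set 'I_5}) : nat :=
  ((o0 \in S) + 2 * (o1 \in S) + 4 * (o2 \in S) + 8 * (o3 \in S) + 16 * (o4 \in S))%N.

Definition mkset (d : nat) : {set 'I_5} := [set j : 'I_5 | bit d j].

Definition costc {R : realType} (p : 'I_5 -> R) (c : nat) : R :=
  \sum_(j < 5) (if bit c j then p j else 0).

Definition L1 : seq nat := [:: 0; 4; 1; 12; 2; 13; 21; 26; 3; 15; 6; 19; 7; 16; 28; 30; 5; 8; 9; 14; 17; 20; 25; 27; 10; 22; 11; 23; 18; 24; 29; 31].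
Definition L2 : seq nat := [:: 0; 1; 3; 19; 2; 5; 6; 28; 4; 9; 11; 24; 7; 22; 18; 30; 8; 10; 17; 25; 13; 16; 20; 29; 12; 15; 21; 27; 14; 26; 23; 31].

Definition rk (L : seq nat) (S : {set 'I_5}) : nat := nth 0%N L (code S).
Definition prL (L : seq nat) : pref 5 := fun S T => (rk L S <= rk L T)%N.

Definition Pc (c d : nat) : Prop := forall (R : realType) (p : 'I_5 -> R) (b1 b2 : R),
  0 < b2 -> b2 < b1 -> b1 < 4 / 3 * b2 ->
  costc p c <= b1 -> costc p d <= b2 ->
  (forall e, (e < 32)%N -> (nth 0%N L1 c < nth 0%N L1 e)%N -> b1 < costc p e) ->
  (forall e, (e < 32)%N -> (nth 0%N L2 d < nth 0%N L2 e)%N -> b2 < costc p e) -> False.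

Lemma k0 : Pc 0 31.
Proof.
move=> R p b1 b2 hb2 h12 h43 H1 H2 D1 D2.
have := D1 31%N isT isT.
move: H1 H2; rewrite /costc !big_ord_recl !big_ord0 /=.
lra.
Qed.

Lemma k1 : Pc 1 30.
Proof.
move=> R p b1 b2 hb2 h12 h43 H1 H2 D1 D2.
have := D1 30%N isT isT.
move: H1 H2; rewrite /costc !big_ord_recl !big_ord0 /=.
lra.
Qed.

Lemma k2 : Pc 2 29.
Proof.
move=> R p b1 b2 hb2 h12 h43 H1 H2 D1 D2.
have := D1 29%N isT isT.
move: H1 H2; rewrite /costc !big_ord_recl !big_ord0 /=.
lra.
Qed.

Lemma k3 : Pc 3 28.
Proof.
move=> R p b1 b2 hb2 h12 h43 H1 H2 D1 D2.
have := D1 28%N isT isT.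
move: H1 H2; rewrite /costc !big_ord_recl !big_ord0 /=.
lra.
Qed.

Lemma k4 : Pc 4 27.
Proof.
move=> R p b1 b2 hb2 h12 h43 H1 H2 D1 D2.
have := D1 27%N isT isT.
move: H1 H2; rewrite /costc !big_ord_recl !big_ord0 /=.
lra.
Qed.

Lemma k5 : Pc 5 26.
Proof.
move=> R p b1 b2 hb2 h12 h43 H1 H2 D1 D2.
have := D2 11%N isT isT. have := D1 20%N isT isT.
move: H1 H2; rewrite /costc !big_ord_recl !big_ord0 /=.
lra.
Qed.

Lemma k6 : Pc 6 25.
Proof.
move=> R p b1 b2 hb2 h12 h43 H1 H2 D1 D2.
have := D1 25%N isT isT.
move: H1 H2; rewrite /costc !big_ord_recl !big_ord0 /=.
lra.
Qed.

Lemma k7 : Pc 7 24.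
Proof.
move=> R p b1 b2 hb2 h12 h43 H1 H2 D1 D2.
have := D2 3%N isT isT. have := D2 13%N isT isT. have := D1 14%N isT isT. have := D2 20%N isT isT.
move: H1 H2; rewrite /costc !big_ord_recl !big_ord0 /=.
lra.
Qed.

Lemma k8 : Pc 8 23.
Proof.
move=> R p b1 b2 hb2 h12 h43 H1 H2 D1 D2.
have := D1 23%N isT isT.
move: H1 H2; rewrite /costc !big_ord_recl !big_ord0 /=.
lra.
Qed.

Lemma k9 : Pc 9 22.
Proof.
move=> R p b1 b2 hb2 h12 h43 H1 H2 D1 D2.
have := D1 22%N isT isT.
move: H1 H2; rewrite /costc !big_ord_recl !big_ord0 /=.
lra.
Qed.

Lemma k10 : Pc 10 21.
Proof.
move=> R p b1 b2 hb2 h12 h43 H1 H2 D1 D2.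
have := D1 21%N isT isT.
move: H1 H2; rewrite /costc !big_ord_recl !big_ord0 /=.
lra.
Qed.

Lemma k11 : Pc 11 20.
Proof.
move=> R p b1 b2 hb2 h12 h43 H1 H2 D1 D2.
have := D1 6%N isT isT. have := D2 25%N isT isT.
move: H1 H2; rewrite /costc !big_ord_recl !big_ord0 /=.
lra.
Qed.

Lemma k12 : Pc 12 19.
Proof.
move=> R p b1 b2 hb2 h12 h43 H1 H2 D1 D2.
have := D1 19%N isT isT.
move: H1 H2; rewrite /costc !big_ord_recl !big_ord0 /=.
lra.
Qed.

Lemma k13 : Pc 13 18.
Proof.
move=> R p b1 b2 hb2 h12 h43 H1 H2 D1 D2.
have := D2 11%N isT isT. have := D1 20%N isT isT.
move: H1 H2; rewrite /costc !big_ord_recl !big_ord0 /=.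
lra.
Qed.

Lemma k14 : Pc 14 17.
Proof.
move=> R p b1 b2 hb2 h12 h43 H1 H2 D1 D2.
have := D2 3%N isT isT. have := D2 13%N isT isT. have := D2 20%N isT isT. have := D2 24%N isT isT.
move: H1 H2; rewrite /costc !big_ord_recl !big_ord0 /=.
lra.
Qed.

Lemma k15 : Pc 15 16.
Proof.
move=> R p b1 b2 hb2 h12 h43 H1 H2 D1 D2.
have := D2 7%N isT isT. have := D2 11%N isT isT. have := D2 13%N isT isT. have := D2 14%N isT isT.
move: H1 H2; rewrite /costc !big_ord_recl !big_ord0 /=.
lra.
Qed.

Lemma k16 : Pc 16 15.
Proof.
move=> R p b1 b2 hb2 h12 h43 H1 H2 D1 D2.
have := D1 15%N isT isT.
move: H1 H2; rewrite /costc !big_ord_recl !big_ord0 /=.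
lra.
Qed.

Lemma k17 : Pc 17 14.
Proof.
move=> R p b1 b2 hb2 h12 h43 H1 H2 D1 D2.
have := D1 14%N isT isT.
move: H1 H2; rewrite /costc !big_ord_recl !big_ord0 /=.
lra.
Qed.

Lemma k18 : Pc 18 13.
Proof.
move=> R p b1 b2 hb2 h12 h43 H1 H2 D1 D2.
have := D1 13%N isT isT.
move: H1 H2; rewrite /costc !big_ord_recl !big_ord0 /=.
lra.
Qed.

Lemma k19 : Pc 19 12.
Proof.
move=> R p b1 b2 hb2 h12 h43 H1 H2 D1 D2.
have := D1 15%N isT isT. have := D2 16%N isT isT.
move: H1 H2; rewrite /costc !big_ord_recl !big_ord0 /=.
lra.
Qed.

Lemma k20 : Pc 20 11.
Proof.
move=> R p b1 b2 hb2 h12 h43 H1 H2 D1 D2.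
have := D1 11%N isT isT.
move: H1 H2; rewrite /costc !big_ord_recl !big_ord0 /=.
lra.
Qed.

Lemma k21 : Pc 21 10.
Proof.
move=> R p b1 b2 hb2 h12 h43 H1 H2 D1 D2.
have := D1 7%N isT isT. have := D2 24%N isT isT.
move: H1 H2; rewrite /costc !big_ord_recl !big_ord0 /=.
lra.
Qed.

Lemma k22 : Pc 22 9.
Proof.
move=> R p b1 b2 hb2 h12 h43 H1 H2 D1 D2.
have := D1 14%N isT isT. have := D2 17%N isT isT.
move: H1 H2; rewrite /costc !big_ord_recl !big_ord0 /=.
lra.
Qed.

Lemma k23 : Pc 23 8.
Proof.
move=> R p b1 b2 hb2 h12 h43 H1 H2 D1 D2.
have := D1 15%N isT isT. have := D2 16%N isT isT.
move: H1 H2; rewrite /costc !big_ord_recl !big_ord0 /=.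
lra.
Qed.

Lemma k24 : Pc 24 7.
Proof.
move=> R p b1 b2 hb2 h12 h43 H1 H2 D1 D2.
have := D1 11%N isT isT. have := D1 20%N isT isT.
move: H1 H2; rewrite /costc !big_ord_recl !big_ord0 /=.
lra.
Qed.

Lemma k25 : Pc 25 6.
Proof.
move=> R p b1 b2 hb2 h12 h43 H1 H2 D1 D2.
have := D1 15%N isT isT. have := D2 16%N isT isT.
move: H1 H2; rewrite /costc !big_ord_recl !big_ord0 /=.
lra.
Qed.

Lemma k26 : Pc 26 5.
Proof.
move=> R p b1 b2 hb2 h12 h43 H1 H2 D1 D2.
have := D1 15%N isT isT. have := D2 16%N isT isT.
move: H1 H2; rewrite /costc !big_ord_recl !big_ord0 /=.
lra.
Qed.

Lemma k27 : Pc 27 4.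
Proof.
move=> R p b1 b2 hb2 h12 h43 H1 H2 D1 D2.
have := D1 15%N isT isT. have := D2 16%N isT isT.
move: H1 H2; rewrite /costc !big_ord_recl !big_ord0 /=.
lra.
Qed.

Lemma k28 : Pc 28 3.
Proof.
move=> R p b1 b2 hb2 h12 h43 H1 H2 D1 D2.
have := D1 6%N isT isT. have := D1 25%N isT isT.
move: H1 H2; rewrite /costc !big_ord_recl !big_ord0 /=.
lra.
Qed.

Lemma k29 : Pc 29 2.
Proof.
move=> R p b1 b2 hb2 h12 h43 H1 H2 D1 D2.
have := D1 15%N isT isT. have := D2 16%N isT isT.
move: H1 H2; rewrite /costc !big_ord_recl !big_ord0 /=.
lra.
Qed.

Lemma k30 : Pc 30 1.
Proof.
move=> R p b1 b2 hb2 h12 h43 H1 H2 D1 D2.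
have := D1 15%N isT isT. have := D2 16%N isT isT.
move: H1 H2; rewrite /costc !big_ord_recl !big_ord0 /=.
lra.
Qed.

Lemma k31 : Pc 31 0.
Proof.
move=> R p b1 b2 hb2 h12 h43 H1 H2 D1 D2.
have := D2 15%N isT isT. have := D2 23%N isT isT. have := D2 27%N isT isT. have := D2 28%N isT isT.
move: H1 H2; rewrite /costc !big_ord_recl !big_ord0 /=.
lra.
Qed.

Lemma key (c : nat) : (c < 32)%N -> Pc c (31 - c)%N.
Proof.
case: c => [_|c]; first exact: k0.
case: c => [_|c]; first exact: k1.
case: c => [_|c]; first exact: k2.
case: c => [_|c]; first exact: k3.
case: c => [_|c]; first exact: k4.
case: c => [_|c]; first exact: k5.
case: c => [_|c]; first exact: k6.
case: c => [_|c]; first exact: k7.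
case: c => [_|c]; first exact: k8.
case: c => [_|c]; first exact: k9.
case: c => [_|c]; first exact: k10.
case: c => [_|c]; first exact: k11.
case: c => [_|c]; first exact: k12.
case: c => [_|c]; first exact: k13.
case: c => [_|c]; first exact: k14.
case: c => [_|c]; first exact: k15.
case: c => [_|c]; first exact: k16.
case: c => [_|c]; first exact: k17.
case: c => [_|c]; first exact: k18.
case: c => [_|c]; first exact: k19.
case: c => [_|c]; first exact: k20.
case: c => [_|c]; first exact: k21.
case: c => [_|c]; first exact: k22.
case: c => [_|c]; first exact: k23.
case: c => [_|c]; first exact: k24.
case: c => [_|c]; first exact: k25.
case: c => [_|c]; first exact: k26.
case: c => [_|c]; first exact: k27.
case: c => [_|c]; first exact: k28.
case: c => [_|c]; first exact: k29.
case: c => [_|c]; first exact: k30.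
case: c => [_|c]; first exact: k31.
by [].
Qed.

Lemma bit_code S (j : 'I_5) : bit (code S) j = (j \in S).
Proof.
case: j => -[|[|[|[|[|k]]]]] Hj //;
  [ have -> : Ordinal Hj = o0 by apply/val_inj
  | have -> : Ordinal Hj = o1 by apply/val_inj
  | have -> : Ordinal Hj = o2 by apply/val_inj
  | have -> : Ordinal Hj = o3 by apply/val_inj
  | have -> : Ordinal Hj = o4 by apply/val_inj ];
  rewrite /code; case: (o0 \in S); case: (o1 \in S); case: (o2 \in S);
  case: (o3 \in S); case: (o4 \in S).
all: by [].
Qed.

Lemma code_lt S : (code S < 32)%N.
Proof.
rewrite /code; case: (o0 \in S); case: (o1 \in S); case: (o2 \in S);
  case: (o3 \in S); case: (o4 \in S).
all: by [].
Qed.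

Lemma code_mkset d : (d < 32)%N -> code (mkset d) = d.
Proof.
move=> Hd; rewrite /code /mkset !inE.
have /allP/(_ d) : all (fun d => (bit d 0 + 2 * bit d 1 + 4 * bit d 2 + 8 * bit d 3
   + 16 * bit d 4 == d)%N) (iota 0 32) by [].
by rewrite mem_iota Hd => /(_ isT)/eqP.
Qed.

Lemma cost_code (R : realType) (p : 'I_5 -> R) S : cost p S = costc p (code S).
Proof.
rewrite /cost /costc big_mkcond; apply: eq_bigr => j _; by rewrite bit_code.
Qed.

Definition bitsub c d := all (fun k => bit c k ==> bit d k) (iota 0 5).

Definition monoB (L : seq nat) : bool :=
  all (fun c => all (fun d => bitsub c d ==> (nth 0 L c <= nth 0 L d)%N) (iota 0 32)) (iota 0 32).

Lemma monoL L : monoB L -> forall S T : {set 'I_5}, S \subset T -> (rk L S <= rk L T)%N.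
Proof.
move=> /allP H S T /subsetP sST.
have hS : code S \in iota 0 32 by rewrite mem_iota code_lt.
have /allP := H _ hS.
move=> /(_ (code T)); rewrite mem_iota code_lt => /(_ isT)/implyP; apply.
apply/allP => k; rewrite mem_iota add0n => Hk.
apply/implyP; have := bit_code S (Ordinal Hk); have := bit_code T (Ordinal Hk).
move=> /= -> ->; exact: sST.
Qed.

Lemma strictL L : uniq L -> size L = 32%N -> strict_pref (prL L).
Proof.
move=> uL sL S T nST; rewrite /pref_lt /prL -!ltnNge.
case: (ltngtP (rk L S) (rk L T)) => // E.
exfalso; move/negP: nST; apply; apply/eqP.
move: E; rewrite /rk => /eqP; rewrite nth_uniq ?sL ?code_lt // => /eqP E.
apply/setP => j; by rewrite -!bit_code E.
Qed.

Lemma monoPref L : monoB L -> monotone_pref (prL L).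
Proof.
move=> H; split.
- move=> S T; exact: leq_total.
- move=> S T U; exact: leq_trans.
- exact: monoL.
Qed.

Theorem mainTheorem3 (R : realType) :
  exists pr1 pr2 : pref 5,
    [/\ monotone_pref pr1, strict_pref pr1, monotone_pref pr2, strict_pref pr2 &
      forall b1 b2 : R, 0 < b1 -> 0 < b2 -> b2 < b1 -> b1 < 4 / 3 * b2 ->
        ~ (exists (S1 S2 : {set 'I_5}) (p : 'I_5 -> R),
              competitive_equilibrium pr1 pr2 b1 b2 S1 S2 p)].
Proof.
exists (prL L1), (prL L2); split.
- by apply: monoPref.
- by apply: strictL.
- by apply: monoPref.
- by apply: strictL.
move=> b1 b2 hb1 hb2 h12 h43 [S1 [S2 [p [HI HU [C1 D1] [C2 D2]]]]].
have HS2 : forall j, (j \in S2) = ~~ (j \in S1).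
  move=> j; move/setP: HI => /(_ j); move/setP: HU => /(_ j).
  rewrite !inE; by case: (j \in S1); case: (j \in S2).
have Hc2 : code S2 = (31 - code S1)%N.
  rewrite /code !HS2; case: (o0 \in S1); case: (o1 \in S1); case: (o2 \in S1);
    case: (o3 \in S1); case: (o4 \in S1); by [].
apply: (@key (code S1) (code_lt S1) R p b1 b2 hb2 h12 h43).
- by rewrite -cost_code.
- by rewrite -Hc2 -cost_code.
- move=> e he hlt; rewrite -(code_mkset e he) -cost_code; apply: D1.
  by rewrite /pref_lt /prL /rk code_mkset // -ltnNge hlt ltnW.
- move=> e he hlt; rewrite -(code_mkset e he) -cost_code; apply: D2.
  by rewrite /pref_lt /prL /rk code_mkset // -ltnNge Hc2 hlt ltnW.
Qed.
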